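(* If every geodesic on $\Sigma_\Gamma$ intersects the open ball $B(\pi(x),\rho)$, then $S^+(\ell,\rho,x)$ is aperiodic.
   Context: $\mathbb{D}=\{z\in\mathbb{C}:|z|<1\}$ with hyperbolic metric $d$ induced by $ds=2|dz|/(1-|z|^2)$; geodesics are parametrised with unit speed and the normal bundle of an oriented geodesic is oriented by the standard orientation of $\mathbb{D}$ and that of the geodesic. Standing setting: $\Gamma$ is a cocompact Fuchsian group with fundamental domain $\tau$ a hyperbolic polygon whose side-pairing generators are none of them their own inverse; $\Sigma_\Gamma=\Gamma\backslash\mathbb{D}$ with quotient map $\pi$ and induced metric; $\ell$ is a geodesic in $\mathbb{D}$ with unit-speed parametrisation $\kappa_\ell$ such that the image of $\{(\kappa_\ell(t),\kappa_\ell'(t))\}$ in $\operatorname{ST}(\Sigma_\Gamma)$ is a dense orbit of the geodesic flow; $x\in\tau^\circ$ and $\rho>0$. For a geodesic $k$ with unit-speed parametrisation $\kappa$: $\overline{\mathcal{N}(k,\rho)}^+$ is the union of $\{y:d(y,k)<\rho\}$ with the component of its boundary on the positive side of $k$; $p_k$ is orthogonal projection onto $k$; $S^+(k,\rho,x)=\kappa^{-1}(p_k(\Gamma(x)\cap\overline{\mathcal{N}(k,\rho)}^+))\subseteq\mathbb{R}$. A set $S\subseteq\mathbb{R}$ is aperiodic if $S-v\neq S$ for every $v\in\mathbb{R}\setminus\{0\}$. *)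

(* Defs.v *)
From Stdlib Require Import Reals Lra List.
From Coquelicot Require Import Coquelicot.
Open Scope R_scope.

Definition inD (z : C) : Prop := Cmod z < 1.

(** Hyperbolic distance on D induced by ds = 2|dz|/(1-|z|^2):
    cosh d(z,w) = 1 + 2|z-w|^2 / ((1-|z|^2)(1-|w|^2)). *)
Definition arcosh (u : R) : R := ln (u + sqrt (u * u - 1)).
Definition hdist (z w : C) : R :=
  arcosh (1 + 2 * (Cmod (z - w)%C) ^ 2 / ((1 - (Cmod z) ^ 2) * (1 - (Cmod w) ^ 2))).

(** Orientation-preserving isometries of D: z |-> (a z + b)/(conj b z + conj a),
    |a|^2 - |b|^2 = 1  (elements of PSU(1,1)). *)
Definition mob (a b : C) (z : C) : C := ((a * z + b) / (Cconj b * z + Cconj a))%C.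
Definition su11 (a b : C) : Prop := (Cmod a) ^ 2 - (Cmod b) ^ 2 = 1.
Definition isMob (f : C -> C) : Prop :=
  exists a b, su11 a b /\ forall z, inD z -> f z = mob a b z.

Definition isGeodesic (c : R -> C) : Prop :=
  (forall t, inD (c t)) /\ forall s t, hdist (c s) (c t) = Rabs (s - t).

(** Unit-speed parametrisation of the real diameter, oriented towards +1:
    t |-> tanh (t/2). *)
Definition diam (t : R) : C := RtoC ((exp t - 1) / (exp t + 1)).

(** The standard model: the real
    diameter oriented towards +1 has unit tangent 1, positive normal i, hence
    positive side {Im z > 0}; every oriented geodesic is the image of this one
    under an orientation-preserving isometry g, and the positive side of c is
    g({Im > 0}) (independent of the choice of g). *)
Definition posSide (c : R -> C) (y : C) : Prop :=
  inD y /\ exists a b, su11 a b /\ (forall t, c t = mob a b (diam t)) /\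
    0 < Im (mob (Cconj a) (- b)%C y).

Definition closedHP (c : R -> C) (y : C) : Prop :=
  inD y /\ ((exists t, y = c t) \/ posSide c y).

Definition Nplus (c : R -> C) (rho : R) (y : C) : Prop :=
  inD y /\
  ((exists t, hdist y (c t) < rho) \/
   (posSide c y /\ (forall t, rho <= hdist y (c t)) /\ exists t, hdist y (c t) = rho)).

(** S^+(k, rho, x) = kappa^{-1}(p_k(Gamma(x) ∩ Nbar^+(k,rho))):
    t such that kappa t is the orthogonal projection (closest point on k)
    of some g x in Nbar^+. *)
Definition Splus (Gamma : (C -> C) -> Prop) (kappa : R -> C) (rho : R) (x : C)
  (t : R) : Prop :=
  exists g, Gamma g /\ Nplus kappa rho (g x) /\
    forall s, hdist (g x) (kappa t) <= hdist (g x) (kappa s).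

(** S is aperiodic: S - v <> S for all v <> 0  (u ∈ S - v  iff  u + v ∈ S). *)
Definition aperiodic (S : R -> Prop) : Prop :=
  forall v, v <> 0 -> ~ (forall u, S (u + v) <-> S u).

(** Gamma is a Fuchsian group: a subgroup of the orientation-preserving
    isometries of D (elements compared as maps on D) acting properly
    discontinuously (equivalently, discrete). *)
Definition fuchsian (Gamma : (C -> C) -> Prop) : Prop :=
  (forall g, Gamma g -> isMob g) /\
  (exists e, Gamma e /\ forall z, inD z -> e z = z) /\
  (forall f g, Gamma f -> Gamma g ->
     exists h, Gamma h /\ forall z, inD z -> h z = f (g z)) /\
  (forall f, Gamma f -> exists h, Gamma h /\ forall z, inD z -> h (f z) = z) /\
  (forall r, 0 <= r < 1 ->
     exists l : list (C -> C), forall g, Gamma g ->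
       (exists z, Cmod z <= r /\ Cmod (g z) <= r) ->
       exists h, In h l /\ forall z, inD z -> h z = g z).

Definition cocompact (Gamma : (C -> C) -> Prop) : Prop :=
  exists r, r < 1 /\ forall z, inD z -> exists g, Gamma g /\ Cmod (g z) <= r.

Definition interiorD (A : C -> Prop) (z : C) : Prop :=
  exists eps, 0 < eps /\ forall y, Cmod (y - z)%C < eps -> A y.

Definition hyperbolic_polygon (tau : C -> Prop) : Prop :=
  exists cs : list (R -> C),
    (forall c, In c cs -> isGeodesic c) /\
    (forall y, tau y <-> inD y /\ forall c, In c cs -> closedHP c y) /\
    (exists r, r < 1 /\ forall y, tau y -> Cmod y <= r) /\
    (exists z, interiorD tau z).

Definition is_side (tau : C -> Prop) (s : C -> Prop) : Prop :=
  exists c, isGeodesic c /\ (forall y, tau y -> closedHP c y) /\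
    (forall y, s y <-> tau y /\ exists t, y = c t) /\
    (exists y1 y2, s y1 /\ s y2 /\ y1 <> y2).

Definition fundamental_domain (Gamma : (C -> C) -> Prop) (tau : C -> Prop) : Prop :=
  (forall y, tau y -> inD y) /\
  (forall z, inD z -> exists g, Gamma g /\ tau (g z)) /\
  (forall g, Gamma g -> (exists z, inD z /\ g z <> z) ->
     ~ exists z, interiorD tau z /\ interiorD tau (g z)).

Definition img (g : C -> C) (tau : C -> Prop) (y : C) : Prop :=
  exists z, tau z /\ y = g z.

Definition side_pairings_not_involutions (Gamma : (C -> C) -> Prop)
  (tau : C -> Prop) : Prop :=
  forall g, Gamma g -> is_side tau (fun y => tau y /\ img g tau y) ->
    exists z, inD z /\ g (g z) <> z.

(** The image of t |-> (kappa t, kappa' t) in ST(Sigma_Gamma) is dense.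
    A unit tangent vector of D is identified with the unit-speed geodesic it
    generates, the geodesic-flow orbit point at time t with s |-> kappa (t+s),
    and the topology of ST(D) with uniform closeness of geodesics on [-1,1]. *)
Definition dense_orbit (Gamma : (C -> C) -> Prop) (kappa : R -> C) : Prop :=
  forall c, isGeodesic c -> forall eps, 0 < eps ->
    exists t g, Gamma g /\
      forall s, -1 <= s <= 1 -> hdist (g (kappa (t + s))) (c s) < eps.

Definition every_geodesic_meets_ball (Gamma : (C -> C) -> Prop) (x : C) (rho : R) : Prop :=
  forall c, isGeodesic c -> exists t g, Gamma g /\ hdist (c t) (g x) < rho.

(* Main.v *)
Require Import Defs.
From Stdlib Require Import Reals Lra Psatz List Classical.
From Coquelicot Require Import Coquelicot.
Open Scope R_scope.

Lemma exp_neg x : exp (- x) = / exp x.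
Proof. rewrite exp_Ropp. reflexivity. Qed.

Lemma cosh_ge1 x : 1 <= cosh x.
Proof.
  unfold cosh. rewrite exp_neg. pose proof (exp_pos x) as H.
  set (E := exp x) in *.
  assert ((E + / E) / 2 - 1 = (E - 1)^2 / (2 * E)) by (field; lra).
  assert (0 <= (E - 1)^2 / (2 * E)). { apply Rdiv_le_0_compat. apply pow2_ge_0. lra. }
  lra.
Qed.

Lemma cosh_pos x : 0 < cosh x.
Proof. pose proof (cosh_ge1 x); lra. Qed.

Lemma cosh_sinh2 x : cosh x ^ 2 - sinh x ^ 2 = 1.
Proof.
  unfold cosh, sinh. rewrite exp_neg. pose proof (exp_pos x) as H.
  field. lra.
Qed.

Lemma cosh_minus x y : cosh (x - y) = cosh x * cosh y - sinh x * sinh y.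
Proof.
  unfold cosh, sinh. unfold Rminus. rewrite !exp_plus. rewrite Ropp_plus_distr, Ropp_involutive.
  rewrite exp_plus. rewrite !exp_neg. pose proof (exp_pos x). pose proof (exp_pos y).
  field. split; lra.
Qed.

Lemma cosh_opp x : cosh (- x) = cosh x.
Proof. unfold cosh. rewrite Ropp_involutive. field. Qed.

Lemma sinh_opp x : sinh (- x) = - sinh x.
Proof. unfold sinh. rewrite Ropp_involutive. field. Qed.

Lemma cosh_plus x y : cosh (x + y) = cosh x * cosh y + sinh x * sinh y.
Proof.
  replace (x + y) with (x - - y) by ring. rewrite cosh_minus.
  rewrite cosh_opp, sinh_opp. ring.
Qed.

Lemma cosh_abs x : cosh (Rabs x) = cosh x.
Proof. unfold Rabs; destruct (Rcase_abs x); [apply cosh_opp|reflexivity]. Qed.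

Lemma sinh_nonneg x : 0 <= x -> 0 <= sinh x.
Proof.
  intro H. unfold sinh. destruct (Req_dec x 0). subst. rewrite Ropp_0. lra.
  pose proof (exp_increasing (-x) x ltac:(lra)). lra.
Qed.

Lemma cosh_lt_nonneg a b : 0 <= a -> a < b -> cosh a < cosh b.
Proof.
  intros Ha Hab. unfold cosh. rewrite !exp_neg.
  pose proof (exp_increasing a b Hab).
  assert (1 <= exp a). { destruct (Req_dec a 0). subst; rewrite exp_0; lra.
    pose proof (exp_increasing 0 a ltac:(lra)). rewrite exp_0 in H1. lra. }
  set (A := exp a) in *. set (B := exp b) in *.
  assert (HAB : 1 < A * B) by nra.
  assert (/ A - / B = (B - A) / (A*B)) by (field; lra).
  assert ((B - A)/(A*B) < B - A).
  { apply Rmult_lt_reg_r with (A*B). lra.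
     unfold Rdiv. rewrite Rmult_assoc, Rinv_l by lra. nra. }
  lra.
Qed.

Lemma cosh_le_abs a b : Rabs a <= Rabs b -> cosh a <= cosh b.
Proof.
  intro H. rewrite <- (cosh_abs a), <- (cosh_abs b).
  destruct (Req_dec (Rabs a) (Rabs b)) as [E|E]. rewrite E; lra.
  left. apply cosh_lt_nonneg. apply Rabs_pos. lra.
Qed.

Lemma cosh_lt_abs a b : Rabs a < Rabs b -> cosh a < cosh b.
Proof.
  intro H. rewrite <- (cosh_abs a), <- (cosh_abs b).
  apply cosh_lt_nonneg. apply Rabs_pos. lra.
Qed.

Lemma abs_sinh_le_cosh x : Rabs (sinh x) <= cosh x.
Proof.
  pose proof (cosh_sinh2 x). pose proof (cosh_pos x).
  apply Rsqr_incr_0_var. rewrite <- Rsqr_abs. unfold Rsqr. nra. lra.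
Qed.

Lemma arcosh_cosh t : arcosh (cosh t) = Rabs t.
Proof.
  unfold arcosh.
  assert (cosh t * cosh t - 1 = Rsqr (sinh t)) by (pose proof (cosh_sinh2 t); unfold Rsqr; nra).
  rewrite H, sqrt_Rsqr_abs.
  unfold Rabs at 1 2; destruct (Rcase_abs (sinh t)); destruct (Rcase_abs t).
  - replace (cosh t + - sinh t) with (exp (- t)) by (unfold cosh, sinh; field).
    rewrite ln_exp; auto.
  - pose proof (sinh_nonneg t ltac:(lra)); lra.
  - pose proof (sinh_lt t 0 r0). rewrite sinh_0 in H0. lra.
  - replace (cosh t + sinh t) with (exp t) by (unfold cosh, sinh; field).
    rewrite ln_exp; auto.
Qed.

Lemma arcosh_aux_pos u : 1 <= u -> 1 <= u + sqrt (u * u - 1).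
Proof. intro. pose proof (sqrt_pos (u*u-1)). lra. Qed.

Lemma cosh_arcosh u : 1 <= u -> cosh (arcosh u) = u.
Proof.
  intro H. unfold cosh, arcosh. rewrite exp_neg. pose proof (arcosh_aux_pos u H).
  rewrite exp_ln by lra.
  assert (Hs : sqrt (u*u-1) * sqrt (u*u-1) = u*u-1) by (apply sqrt_sqrt; nra).
  set (s := sqrt (u*u-1)) in *.
  assert (/ (u + s) = u - s). { field_simplify_eq. nra. lra. }
  rewrite H1. field.
Qed.

Lemma arcosh_nonneg u : 1 <= u -> 0 <= arcosh u.
Proof.
  intro H. unfold arcosh. pose proof (arcosh_aux_pos u H). rewrite <- ln_1.
  destruct (Req_dec (u + sqrt (u * u - 1)) 1) as [E|E]. rewrite E; lra.
  left. apply ln_increasing; lra.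
Qed.

Lemma arcosh_1 : arcosh 1 = 0.
Proof. rewrite <- cosh_0, arcosh_cosh, Rabs_R0. reflexivity. Qed.

Lemma arcosh_le u w : 1 <= u -> u <= w -> arcosh u <= arcosh w.
Proof.
  intros H1 H2. unfold arcosh. pose proof (arcosh_aux_pos u H1).
  assert (sqrt (u*u-1) <= sqrt (w*w-1)) by (apply sqrt_le_1_alt; nra).
  destruct (Req_dec (u + sqrt (u * u - 1)) (w + sqrt (w * w - 1))) as [E|E]. rewrite E; lra.
  left. apply ln_increasing; lra.
Qed.

Lemma arcosh_lt u w : 1 <= u -> u < w -> arcosh u < arcosh w.
Proof.
  intros H1 H2. unfold arcosh. pose proof (arcosh_aux_pos u H1).
  assert (sqrt (u*u-1) <= sqrt (w*w-1)) by (apply sqrt_le_1_alt; nra).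
  apply ln_increasing; lra.
Qed.

Lemma arcosh_le_inv u w : 1 <= u -> 1 <= w -> arcosh u <= arcosh w -> u <= w.
Proof.
  intros. destruct (Rle_lt_dec u w); auto. pose proof (arcosh_lt w u H0 r). lra.
Qed.

Lemma arcosh_lt_inv u w : 1 <= u -> 1 <= w -> arcosh u < arcosh w -> u < w.
Proof.
  intros. destruct (Rlt_le_dec u w); auto. pose proof (arcosh_le w u H0 r). lra.
Qed.

Lemma arcosh_le_cosh u t : 1 <= u -> 0 <= t -> u <= cosh t -> arcosh u <= t.
Proof.
  intros. pose proof (arcosh_le u (cosh t) H H1). rewrite arcosh_cosh, Rabs_pos_eq in H2; auto.
Qed.

Lemma lt_arcosh_cosh u t : 1 <= u -> 0 <= t -> arcosh u < t -> u < cosh t.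
Proof.
  intros. rewrite <- (cosh_arcosh u H). apply cosh_lt_nonneg; auto. apply arcosh_nonneg; auto.
Qed.

Lemma le_arcosh_cosh u t : 1 <= u -> 0 <= t -> arcosh u <= t -> u <= cosh t.
Proof.
  intros. rewrite <- (cosh_arcosh u H). apply cosh_le_abs. rewrite !Rabs_pos_eq; auto. apply arcosh_nonneg; auto.
Qed.

Definition n2 (z : C) : R := fst z ^ 2 + snd z ^ 2.

Lemma n2_nonneg z : 0 <= n2 z.
Proof. unfold n2. pose proof (pow2_ge_0 (fst z)); pose proof (pow2_ge_0 (snd z)); lra. Qed.

Lemma Cmod2 z : Cmod z ^ 2 = n2 z.
Proof. rewrite Cmod2_alt. reflexivity. Qed.

Lemma inD_n2 z : inD z <-> n2 z < 1.
Proof.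
  unfold inD. rewrite <- Cmod2. pose proof (Cmod_ge_0 z). split; intro.
  - simpl. nra.
  - destruct (Rlt_le_dec (Cmod z) 1); auto. simpl in H0. nra.
Qed.

Definition chd (z w : C) : R := 1 + 2 * n2 (z - w)%C / ((1 - n2 z) * (1 - n2 w)).

Lemma hdist_chd z w : hdist z w = arcosh (chd z w).
Proof. unfold hdist, chd. rewrite !Cmod2. reflexivity. Qed.

Lemma chd_ge1 z w : n2 z < 1 -> n2 w < 1 -> 1 <= chd z w.
Proof.
  intros. unfold chd. pose proof (n2_nonneg (z - w)%C).
  assert (0 <= 2 * n2 (z - w)%C / ((1 - n2 z) * (1 - n2 w))).
  { apply Rdiv_le_0_compat. lra. apply Rmult_lt_0_compat; lra. }
  lra.
Qed.

Lemma n2_sub_sym z w : n2 (z - w)%C = n2 (w - z)%C.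
Proof. destruct z, w. unfold n2; simpl. ring. Qed.

Lemma chd_sym z w : chd z w = chd w z.
Proof. unfold chd. rewrite n2_sub_sym. f_equal. f_equal. ring. Qed.

Lemma hdist_sym z w : hdist z w = hdist w z.
Proof. rewrite !hdist_chd, chd_sym. reflexivity. Qed.

Lemma hdist_nonneg z w : inD z -> inD w -> 0 <= hdist z w.
Proof. intros. rewrite inD_n2 in *. rewrite hdist_chd. apply arcosh_nonneg, chd_ge1; auto. Qed.

Lemma cosh_hdist z w : inD z -> inD w -> cosh (hdist z w) = chd z w.
Proof. intros. rewrite inD_n2 in *. rewrite hdist_chd. apply cosh_arcosh, chd_ge1; auto. Qed.

Record V3 := mk3 { x0 : R; x1 : R; x2 : R }.
Definition Bm (a b : V3) : R := x0 a * x0 b - x1 a * x1 b - x2 a * x2 b.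
Definition Phi (z : C) : V3 :=
  mk3 ((1 + n2 z) / (1 - n2 z)) (2 * fst z / (1 - n2 z)) (2 * snd z / (1 - n2 z)).

Lemma chd_Bm z w : n2 z < 1 -> n2 w < 1 -> chd z w = Bm (Phi z) (Phi w).
Proof.
  intros. unfold chd, Bm, Phi. simpl. unfold n2 in *. destruct z as [z1 z2], w as [w1 w2]. simpl in *.
  field. lra.
Qed.

Lemma Bm_Phi_self z : n2 z < 1 -> Bm (Phi z) (Phi z) = 1.
Proof.
  intros. unfold Bm, Phi. simpl. unfold n2 in *. destruct z as [z1 z2]. simpl in *. field. lra.
Qed.

Lemma Phi0_pos z : n2 z < 1 -> 0 < x0 (Phi z).
Proof.
  intros. unfold Phi; simpl. pose proof (n2_nonneg z). apply Rdiv_lt_0_compat; lra.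
Qed.

Lemma spacelike W E : Bm W W = 1 -> 0 < x0 W -> Bm E W = 0 -> Bm E E <= 0.
Proof.
  destruct W as [w0 w1 w2], E as [e0 e1 e2]. unfold Bm; simpl. intros H1 H2 H3.
  assert (e0 * w0 = e1 * w1 + e2 * w2) by lra.
  assert (HC: (e1*w1 + e2*w2)^2 <= (e1^2+e2^2)*(w1^2+w2^2)).
  { pose proof (pow2_ge_0 (e1*w2 - e2*w1)). nra. }
  assert (e0^2 * w0^2 <= (e1^2+e2^2) * (w0^2 - 1)).
  { replace (e0^2*w0^2) with ((e0*w0)^2) by ring. rewrite H. 
    replace (w0^2 - 1) with (w1^2+w2^2) by nra. auto. }
  assert (e0^2 <= e1^2 + e2^2).
  { pose proof (pow2_ge_0 e1); pose proof (pow2_ge_0 e2).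
    assert (e0^2 * w0^2 <= (e1^2+e2^2) * w0^2) by nra.
    apply Rmult_le_reg_r with (w0^2). nra. lra. }
  nra.
Qed.

Lemma spacelike_zero W E : Bm W W = 1 -> 0 < x0 W -> Bm E W = 0 -> Bm E E = 0 ->
  x0 E = 0 /\ x1 E = 0 /\ x2 E = 0.
Proof.
  destruct W as [w0 w1 w2], E as [e0 e1 e2]. unfold Bm; simpl. intros H1 H2 H3 H4.
  assert (e0 * w0 = e1 * w1 + e2 * w2) by lra.
  assert (HC: (e1*w1 + e2*w2)^2 <= (e1^2+e2^2)*(w1^2+w2^2)).
  { pose proof (pow2_ge_0 (e1*w2 - e2*w1)). nra. }
  assert (e0^2 * w0^2 <= e0^2 * (w0^2 - 1)).
  { replace (e0^2*w0^2) with ((e0*w0)^2) by ring. rewrite H.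
    replace (w0^2 - 1) with (w1^2+w2^2) by nra. replace (e0^2) with (e1^2+e2^2) by nra. auto. }
  assert (e0 = 0) by nra.
  subst. assert (e1^2 + e2^2 = 0) by nra.
  pose proof (pow2_ge_0 e1); pose proof (pow2_ge_0 e2).
  split; auto. split; nra.
Qed.

Lemma discr_le a b c : (forall l, a + 2 * l * b + l^2 * c <= 0) -> b^2 <= a * c.
Proof.
  intro H.
  destruct (Req_dec c 0) as [E|E].
  - subst. destruct (Req_dec b 0). subst. pose proof (H 0). nra.
    pose proof (H ((1 - a)/(2*b))). replace (a + 2 * ((1 - a) / (2 * b)) * b + ((1 - a) / (2 * b))^2 * 0) with 1 in H1 by (field; auto). lra.
  - pose proof (H (- b / c)).
    assert (c < 0). { destruct (Rlt_le_dec c 0) as [Hc|Hc]; auto. exfalso. assert (Hc' : 0 < c) by lra.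
       pose proof (Rabs_pos a) as Pa. pose proof (Rabs_pos b) as Pb.
       set (l := (2 * Rabs b + Rabs a + 1)/c + 1).
       pose proof (H l) as Hl.
       assert (Hlc : l * c = 2 * Rabs b + Rabs a + 1 + c) by (unfold l; field; auto).
       assert (Hl0 : 1 <= l). { unfold l. assert (0 <= (2 * Rabs b + Rabs a + 1)/c) by (apply Rdiv_le_0_compat; lra). lra. }
       pose proof (Rle_abs (-a)) as Ha. rewrite Rabs_Ropp in Ha. pose proof (Rle_abs (-b)) as Hb. rewrite Rabs_Ropp in Hb.
       assert (Hl2 : l^2*c = l * (2 * Rabs b + Rabs a + 1 + c)) by (rewrite <- Hlc; ring).
       rewrite Hl2 in Hl.
       assert (2*l*b >= - 2 * l * Rabs b) by nra.
       assert (l * Rabs a >= Rabs a) by nra.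
       assert (l * c > 0) by nra.
       assert (l * (2 * Rabs b + Rabs a + 1 + c) = 2*l*Rabs b + l * Rabs a + l + l*c) by ring.
       lra. }
    replace (a + 2 * (- b / c) * b + (- b / c) ^ 2 * c) with (a - b^2/c) in H0 by (field; auto).
    assert (b^2/c * c = b^2) by (field; auto).
    nra.
Qed.

Definition vlin (a : R) (A : V3) (b : R) (B : V3) : V3 :=
  mk3 (a * x0 A + b * x0 B) (a * x1 A + b * x1 B) (a * x2 A + b * x2 B).

Lemma Bm_sym A B : Bm A B = Bm B A.
Proof. unfold Bm; ring. Qed.

Lemma tri_Bm Z W U : Bm Z Z = 1 -> Bm W W = 1 -> Bm U U = 1 -> 0 < x0 W ->
  Bm Z U <= Bm Z W * Bm U W + sqrt ((Bm Z W ^ 2 - 1) * (Bm U W ^ 2 - 1)).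
Proof.
  intros HZ HW HU HW0.
  set (a := Bm Z W). set (b := Bm U W). set (c := Bm Z U).
  assert (forall l, (1 - a^2) + 2 * l * (c - a * b) + l^2 * (1 - b^2) <= 0).
  { intro l.
    set (E := mk3 (x0 Z - a * x0 W + l * (x0 U - b * x0 W))
                  (x1 Z - a * x1 W + l * (x1 U - b * x1 W))
                  (x2 Z - a * x2 W + l * (x2 U - b * x2 W))).
    assert (H1 : Bm E W = Bm Z W - a * Bm W W + l * (Bm U W - b * Bm W W)) by (unfold E, Bm; simpl; ring).
    assert (H2 : Bm E E = Bm Z Z - 2 * a * Bm Z W + a^2 * Bm W W
        + 2 * l * (Bm Z U - a * Bm U W - b * Bm Z W + a * b * Bm W W)
        + l^2 * (Bm U U - 2 * b * Bm U W + b^2 * Bm W W)) by (unfold E, Bm; simpl; ring).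
    assert (Bm E W = 0) by (rewrite H1; fold a b; rewrite HW; ring).
    pose proof (spacelike W E HW HW0 H).
    rewrite H2 in H0. fold a b c in H0. rewrite HZ, HW, HU in H0.
    replace ((1 - a^2) + 2 * l * (c - a * b) + l^2 * (1 - b^2)) with
      (1 - 2 * a * a + a ^ 2 * 1 + 2 * l * (c - a * b - b * a + a * b * 1) + l ^ 2 * (1 - 2 * b * b + b ^ 2 * 1)) by ring.
    auto. }
  apply discr_le in H.
  assert (c - a * b <= sqrt ((a ^ 2 - 1) * (b ^ 2 - 1))).
  { apply Rle_trans with (Rabs (c - a*b)). apply Rle_abs.
    rewrite <- sqrt_Rsqr_abs.
    apply sqrt_le_1_alt. unfold Rsqr. nra. }
  lra.
Qed.

Lemma hdist_tri z w u : inD z -> inD w -> inD u -> hdist z u <= hdist z w + hdist w u.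
Proof.
  intros Hz Hw Hu.
  pose proof (hdist_nonneg z w Hz Hw). pose proof (hdist_nonneg w u Hw Hu).
  pose proof (cosh_hdist z w Hz Hw) as Ea. pose proof (cosh_hdist w u Hw Hu) as Eb.
  set (al := hdist z w) in *. set (be := hdist w u) in *.
  rewrite inD_n2 in Hz, Hw, Hu.
  rewrite hdist_chd. apply arcosh_le_cosh. apply chd_ge1; auto. lra.
  rewrite cosh_plus.
  pose proof (tri_Bm (Phi z) (Phi w) (Phi u) (Bm_Phi_self z Hz) (Bm_Phi_self w Hw) (Bm_Phi_self u Hu) (Phi0_pos w Hw)) as T.
  rewrite <- !chd_Bm in T by auto.
  rewrite (chd_sym u w) in T. rewrite <- Ea, <- Eb in T.
  replace ((cosh al ^ 2 - 1) * (cosh be ^ 2 - 1)) with ((sinh al * sinh be)^2) in T.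
  rewrite sqrt_pow2 in T. lra.
  apply Rmult_le_pos; apply sinh_nonneg; auto.
  pose proof (cosh_sinh2 al); pose proof (cosh_sinh2 be). 
  replace (cosh al ^ 2 - 1) with (sinh al ^ 2) by lra. replace (cosh be ^ 2 - 1) with (sinh be ^ 2) by lra. ring.
Qed.

Lemma V3_eq A B : x0 A = x0 B -> x1 A = x1 B -> x2 A = x2 B -> A = B.
Proof. destruct A, B; simpl; intros; subst; reflexivity. Qed.

Lemma Bm_vlin Y a A b B : Bm Y (vlin a A b B) = a * Bm Y A + b * Bm Y B.
Proof. unfold Bm, vlin; simpl; ring. Qed.

Lemma geo_inD c s : isGeodesic c -> n2 (c s) < 1.
Proof. intros [H _]. apply inD_n2, H. Qed.

Lemma geo_cosh c : isGeodesic c -> forall s t, chd (c s) (c t) = cosh (s - t).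
Proof.
  intros Hc s t. destruct Hc as [H1 H2].
  rewrite <- cosh_hdist by auto. rewrite H2. apply cosh_abs.
Qed.

Lemma geo_Bm c : isGeodesic c -> forall s t, Bm (Phi (c s)) (Phi (c t)) = cosh (s - t).
Proof.
  intros Hc s t. rewrite <- chd_Bm by (apply geo_inD; auto). apply geo_cosh; auto.
Qed.

Lemma sinh1_pos : 0 < sinh 1.
Proof. pose proof (sinh_lt 0 1 ltac:(lra)). rewrite sinh_0 in H. auto. Qed.

Lemma geo_frame c : isGeodesic c -> exists P Q, forall s, Phi (c s) = vlin (cosh s) P (sinh s) Q.
Proof.
  intros Hc.
  set (X := fun s => Phi (c s)).
  set (P := X 0).
  set (k1 := - cosh 1 / sinh 1). set (k2 := / sinh 1).
  exists P, (vlin k1 P k2 (X 1)).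
  intro s.
  assert (HB : forall s t, Bm (X s) (X t) = cosh (s - t)) by (intros; apply geo_Bm; auto).
  pose proof sinh1_pos as HS.
  assert (HPP : Bm P P = 1) by (unfold P; rewrite HB; replace (0-0) with 0 by ring; apply cosh_0).
  assert (HX1P : Bm (X 1) P = cosh 1) by (unfold P; rewrite HB; f_equal; ring).
  assert (HXsP : Bm (X s) P = cosh s) by (unfold P; rewrite HB; f_equal; ring).
  assert (HXsXs : Bm (X s) (X s) = 1) by (rewrite HB; replace (s-s) with 0 by ring; apply cosh_0).
  assert (HX1X1 : Bm (X 1) (X 1) = 1) by (rewrite HB; replace (1-1) with 0 by ring; apply cosh_0).
  assert (HXsX1 : Bm (X s) (X 1) = cosh s * cosh 1 - sinh s * sinh 1) by (rewrite HB; apply cosh_minus).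
  pose proof (cosh_sinh2 1) as C1. pose proof (cosh_sinh2 s) as Cs.
  assert (K1 : k1 + k2 * cosh 1 = 0) by (unfold k1, k2; field; lra).
  assert (K2 : k1^2 + 2 * k1 * k2 * cosh 1 + k2^2 = -1).
  { unfold k1, k2. field_simplify. 2: lra. replace (cosh 1 ^ 2) with (1 + sinh 1 ^ 2) by lra. field. lra. }
  assert (K3 : k1 * cosh s + k2 * (cosh s * cosh 1 - sinh s * sinh 1) = - sinh s) by (unfold k1, k2; field; lra).
  set (E := mk3 (x0 (X s) - (cosh s * x0 P + sinh s * (k1 * x0 P + k2 * x0 (X 1))))
                (x1 (X s) - (cosh s * x1 P + sinh s * (k1 * x1 P + k2 * x1 (X 1))))
                (x2 (X s) - (cosh s * x2 P + sinh s * (k1 * x2 P + k2 * x2 (X 1))))).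
  assert (EP : Bm E P = Bm (X s) P - cosh s * Bm P P - sinh s * (k1 * Bm P P + k2 * Bm (X 1) P))
    by (unfold E, Bm; simpl; ring).
  assert (EE : Bm E E = Bm (X s) (X s) + cosh s ^ 2 * Bm P P
     + sinh s ^ 2 * (k1^2 * Bm P P + 2 * k1 * k2 * Bm (X 1) P + k2^2 * Bm (X 1) (X 1))
     - 2 * cosh s * Bm (X s) P - 2 * sinh s * (k1 * Bm (X s) P + k2 * Bm (X s) (X 1))
     + 2 * cosh s * sinh s * (k1 * Bm P P + k2 * Bm (X 1) P)) by (unfold E, Bm; simpl; ring).
  rewrite HPP, HX1P, HXsP in EP.
  rewrite HPP, HX1P, HXsP, HXsXs, HX1X1, HXsX1 in EE.
  assert (EP0 : Bm E P = 0).
  { rewrite EP. replace (k1 * 1 + k2 * cosh 1) with 0 by lra. ring. }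
  assert (EE0 : Bm E E = 0).
  { rewrite EE. replace (k1 * 1 + k2 * cosh 1) with 0 by lra.
    replace (k1 ^ 2 * 1 + 2 * k1 * k2 * cosh 1 + k2 ^ 2 * 1) with (-1) by lra.
    replace (k1 * cosh s + k2 * (cosh s * cosh 1 - sinh s * sinh 1)) with (- sinh s) by lra.
    nra. }
  assert (HP0 : 0 < x0 P) by (apply Phi0_pos, geo_inD; auto).
  destruct (spacelike_zero P E HPP HP0 EP0 EE0) as [e0 [e1 e2]].
  unfold E in e0, e1, e2; simpl in e0, e1, e2.
  apply V3_eq; unfold vlin; simpl; fold (X s); lra.
Qed.

Lemma AP al be : (forall s, 1 <= al * cosh s + be * sinh s) ->
  exists A p, 1 <= A /\ forall s, al * cosh s + be * sinh s = A * cosh (s - p).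
Proof.
  intro H.
  assert (Hform : forall s, al * cosh s + be * sinh s = ((al + be) * exp s + (al - be) * / exp s) / 2).
  { intro s. unfold cosh, sinh. rewrite exp_neg. field. pose proof (exp_pos s); lra. }
  assert (Hp : 0 < al + be).
  { destruct (Rlt_le_dec 0 (al + be)); auto. exfalso.
    set (s := ln (Rabs (al - be) + 1)).
    pose proof (H s) as Hs. rewrite Hform in Hs.
    assert (Es : exp s = Rabs (al - be) + 1) by (unfold s; apply exp_ln; pose proof (Rabs_pos (al-be)); lra).
    rewrite Es in Hs. pose proof (Rabs_pos (al-be)). pose proof (Rle_abs (al - be)).
    assert ((al + be) * (Rabs (al - be) + 1) <= 0) by nra.
    assert ((al - be) * / (Rabs (al - be) + 1) < 1).
    { apply Rmult_lt_reg_r with (Rabs (al - be) + 1). lra. rewrite Rmult_assoc, Rinv_l by lra. lra. }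
    lra. }
  assert (Hm : 0 < al - be).
  { destruct (Rlt_le_dec 0 (al - be)); auto. exfalso.
    set (s := - ln (Rabs (al + be) + 1)).
    pose proof (H s) as Hs. rewrite Hform in Hs.
    assert (Es : exp s = / (Rabs (al + be) + 1)) by (unfold s; rewrite exp_neg, exp_ln; auto; pose proof (Rabs_pos (al+be)); lra).
    rewrite Es, Rinv_inv in Hs. pose proof (Rabs_pos (al+be)). pose proof (Rle_abs (al + be)).
    assert ((al - be) * (Rabs (al + be) + 1) <= 0) by nra.
    assert ((al + be) * / (Rabs (al + be) + 1) < 1).
    { apply Rmult_lt_reg_r with (Rabs (al + be) + 1). lra. rewrite Rmult_assoc, Rinv_l by lra. lra. }
    lra. }
  set (u := ln (al + be)). set (w := ln (al - be)).
  set (p := (w - u) / 2).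
  assert (Hf : forall s, al * cosh s + be * sinh s = exp ((u + w)/2) * cosh (s - p)).
  { intro s. rewrite Hform. unfold cosh. rewrite Rmult_div_assoc, Rmult_plus_distr_l, <- !exp_plus.
    replace ((u + w) / 2 + (s - p)) with (u + s) by (unfold p; field).
    replace ((u + w) / 2 + - (s - p)) with (w + - s) by (unfold p; field).
    rewrite !exp_plus. unfold u, w. rewrite !exp_ln by lra. rewrite exp_neg. reflexivity. }
  exists (exp ((u + w)/2)), p. split; auto.
  pose proof (H p). rewrite Hf in H0. replace (p - p) with 0 in H0 by ring. rewrite cosh_0 in H0. lra.
Qed.

Lemma geo_proj c y : isGeodesic c -> inD y ->
  exists A p, 1 <= A /\ forall s, chd y (c s) = A * cosh (s - p).
Proof.
  intros Hc Hy. destruct (geo_frame c Hc) as [P [Q HPQ]].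
  assert (Hy' : n2 y < 1) by (apply inD_n2; auto).
  assert (forall s, chd y (c s) = Bm (Phi y) P * cosh s + Bm (Phi y) Q * sinh s).
  { intro s. rewrite chd_Bm by (auto; apply geo_inD; auto). rewrite HPQ, Bm_vlin. ring. }
  destruct (AP (Bm (Phi y) P) (Bm (Phi y) Q)) as [A [p [HA Hp]]].
  { intro s. rewrite <- H. apply chd_ge1; auto. apply geo_inD; auto. }
  exists A, p. split; auto. intro s. rewrite H. apply Hp.
Qed.

Definition Kc : R := 1 + / sinh 1 ^ 2 + / (2 * cosh 1 * sinh 1).

Lemma LR c1 c2 eta : isGeodesic c1 -> isGeodesic c2 ->
  chd (c1 (-1)) (c2 (-1)) <= 1 + eta -> chd (c1 0) (c2 0) <= 1 + eta -> chd (c1 1) (c2 1) <= 1 + eta ->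
  forall s, chd (c1 s) (c2 s) <= 1 + eta * Kc * cosh s ^ 2.
Proof.
  intros G1 G2 Hm1 H0 H1 s.
  destruct (geo_frame c1 G1) as [P1 [Q1 F1]]. destruct (geo_frame c2 G2) as [P2 [Q2 F2]].
  set (a := Bm P1 P2). set (b := Bm Q1 Q2). set (m := Bm P1 Q2 + Bm Q1 P2).
  assert (Hg : forall t, chd (c1 t) (c2 t) = cosh t ^ 2 * a + sinh t ^ 2 * b + cosh t * sinh t * m).
  { intro t. rewrite chd_Bm by (apply geo_inD; auto). rewrite F1, F2. unfold a, b, m, Bm, vlin; simpl. ring. }
  assert (L0 : 1 <= chd (c1 0) (c2 0)) by (apply chd_ge1; apply geo_inD; auto).
  assert (L1 : 1 <= chd (c1 1) (c2 1)) by (apply chd_ge1; apply geo_inD; auto).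
  assert (Lm1 : 1 <= chd (c1 (-1)) (c2 (-1))) by (apply chd_ge1; apply geo_inD; auto).
  rewrite Hg in L0, L1, Lm1, H0, H1, Hm1. rewrite Hg.
  rewrite cosh_0, sinh_0 in L0, H0.
  assert (Em1 : cosh (-1) = cosh 1) by (rewrite <- cosh_opp; f_equal; ring).
  assert (Em2 : sinh (-1) = - sinh 1) by (rewrite <- sinh_opp; f_equal; ring).
  rewrite Em1, Em2 in Lm1, Hm1.
  pose proof sinh1_pos as HS. pose proof (cosh_ge1 1) as HC.
  set (C := cosh 1) in *. set (S := sinh 1) in *.
  assert (CS : C^2 = 1 + S^2) by (pose proof (cosh_sinh2 1); unfold C, S; lra).
  assert (Ha1 : 1 <= a) by lra.
  assert (Ha2 : a <= 1 + eta) by lra.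
  assert (Heta : 0 <= eta) by lra.
  assert (Hb : b * S^2 <= eta - S^2).
  { assert (C^2 * a + S^2 * b <= 1 + eta) by lra.
    assert (C^2 * a >= C^2) by (pose proof (pow2_ge_0 C); nra). lra. }
  assert (Hm : Rabs m * (C * S) <= eta / 2).
  { assert (m * (C*S) <= eta/2) by lra. assert (- m * (C*S) <= eta/2) by lra.
    unfold Rabs; destruct (Rcase_abs m); lra. }
  assert (HCS : 0 < C * S) by nra.
  assert (Hm' : Rabs m <= eta / (2 * C * S)).
  { replace (eta / (2 * C * S)) with ((eta/2) / (C*S)) by (field; lra).
    apply Rmult_le_reg_r with (C*S); auto. unfold Rdiv. rewrite Rmult_assoc, Rinv_l by lra. lra. }
  assert (Hb' : b <= eta / S^2 - 1).
  { apply Rmult_le_reg_r with (S^2). nra. unfold Rdiv. rewrite Rmult_minus_distr_r, Rmult_assoc, Rinv_l by nra. lra. }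
  set (cs := cosh s). set (sn := sinh s).
  assert (Hcs : cs^2 - sn^2 = 1) by apply cosh_sinh2.
  pose proof (cosh_pos s) as Pc. fold cs in Pc.
  assert (Hsn : Rabs sn <= cs) by apply abs_sinh_le_cosh.
  assert (Hsn2 : sn^2 <= cs^2) by lra.
  assert (T3 : cs * sn * m <= cs^2 * (eta / (2 * C * S))).
  { apply Rle_trans with (Rabs (cs * sn * m)). apply Rle_abs.
    rewrite !Rabs_mult, (Rabs_pos_eq cs) by lra.
    replace (cs^2 * (eta / (2*C*S))) with (cs * cs * (eta / (2*C*S))) by ring.
    apply Rmult_le_compat. apply Rmult_le_pos; [lra| apply Rabs_pos]. apply Rabs_pos.
    apply Rmult_le_compat_l; lra. auto. }
  assert (T1 : cs^2 * a <= cs^2 * (1 + eta)) by (apply Rmult_le_compat_l; [apply pow2_ge_0| lra]).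
  assert (T2 : sn^2 * b <= sn^2 * (eta / S^2 - 1)) by (apply Rmult_le_compat_l; [apply pow2_ge_0| lra]).
  assert (T4 : sn^2 * (eta / S^2) <= cs^2 * (eta / S^2)).
  { apply Rmult_le_compat_r; auto. apply Rdiv_le_0_compat; auto. nra. }
  assert (cs^2 * (1 + eta) + sn^2 * (eta / S^2 - 1) + cs^2 * (eta / (2*C*S))
     = 1 + eta * cs^2 + sn^2 * (eta / S^2) + cs^2 * (eta/(2*C*S))) by (replace (cs^2) with (1 + sn^2) by lra; ring).
  assert (1 + eta * cs^2 + cs^2 * (eta / S^2) + cs^2 * (eta/(2*C*S)) = 1 + eta * Kc * cs^2).
  { unfold Kc; fold C S. field. lra. }
  lra.
Qed.

Lemma n2_mul p q : n2 (p * q)%C = n2 p * n2 q.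
Proof. destruct p, q; unfold n2; simpl. ring. Qed.

Lemma n2_div p q : n2 q <> 0 -> n2 (p / q)%C = n2 p / n2 q.
Proof.
  destruct p as [p1 p2], q as [q1 q2]; unfold n2; simpl. intro H.
  assert (H' : q1*q1+q2*q2 <> 0) by (intro E; apply H; rewrite !Rmult_1_r; exact E).
  unfold Cdiv, Cinv, Cmult; simpl. field. auto.
Qed.

Lemma sub_div p q r s : n2 q <> 0 -> n2 s <> 0 -> (p / q - r / s)%C = ((p * s - r * q) / (q * s))%C.
Proof.
  destruct p as [p1 p2], q as [q1 q2], r as [r1 r2], s as [s1 s2]; unfold n2; simpl. intros H1 H2.
  unfold Cdiv, Cinv, Cmult, Cminus, Cplus, Copp; simpl. f_equal; field; split; auto; nra.
Qed.

Lemma su11_n2 a b : su11 a b -> n2 a - n2 b = 1.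
Proof. unfold su11. rewrite !Cmod2. auto. Qed.

Definition Nm (a b z : C) : C := (a * z + b)%C.
Definition Dm (a b z : C) : C := (Cconj b * z + Cconj a)%C.

Lemma mob_eq a b z : mob a b z = (Nm a b z / Dm a b z)%C.
Proof. reflexivity. Qed.

Lemma DN a b z : su11 a b -> n2 (Dm a b z) - n2 (Nm a b z) = 1 - n2 z.
Proof.
  intro Hab. pose proof (su11_n2 a b Hab) as H.
  transitivity ((n2 a - n2 b) * (1 - n2 z)). 2: rewrite H; ring.
  unfold Dm, Nm, n2. destruct a as [a1 a2], b as [b1 b2], z as [z1 z2]; simpl. ring.
Qed.

Lemma Dm_pos a b z : su11 a b -> n2 z < 1 -> 0 < n2 (Dm a b z).
Proof. intros Hab Hz. pose proof (DN a b z Hab). pose proof (n2_nonneg (Nm a b z)). lra. Qed.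

Lemma NDcross a b z w : su11 a b -> (Nm a b z * Dm a b w - Nm a b w * Dm a b z)%C = (z - w)%C.
Proof.
  intro Hab. pose proof (su11_n2 a b Hab) as H. unfold n2 in H.
  unfold Dm, Nm. destruct a as [a1 a2], b as [b1 b2], z as [z1 z2], w as [w1 w2]; cbn [fst snd] in H.
  unfold Cmult, Cminus, Cplus, Copp, Cconj; cbn [fst snd]. f_equal.
  - transitivity ((a1 ^ 2 + a2 ^ 2 - (b1 ^ 2 + b2 ^ 2)) * (z1 - w1)). ring. rewrite H. ring.
  - transitivity ((a1 ^ 2 + a2 ^ 2 - (b1 ^ 2 + b2 ^ 2)) * (z2 - w2)). ring. rewrite H. ring.
Qed.

Lemma mob_n2 a b z : su11 a b -> n2 z < 1 -> n2 (mob a b z) = 1 - (1 - n2 z) / n2 (Dm a b z).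
Proof.
  intros Hab Hz. pose proof (Dm_pos a b z Hab Hz). rewrite mob_eq, n2_div by lra.
  pose proof (DN a b z Hab). field_simplify_eq; lra.
Qed.

Lemma mob_inD a b z : su11 a b -> inD z -> inD (mob a b z).
Proof.
  intro Hab. rewrite !inD_n2. intro Hz. rewrite mob_n2 by auto.
  pose proof (Dm_pos a b z Hab Hz). assert (0 < (1 - n2 z) / n2 (Dm a b z)) by (apply Rdiv_lt_0_compat; lra). lra.
Qed.

Lemma mob_chd a b z w : su11 a b -> inD z -> inD w -> chd (mob a b z) (mob a b w) = chd z w.
Proof.
  intro Hab. rewrite !inD_n2. intros Hz Hw. unfold chd.
  rewrite !mob_n2 by auto. rewrite !mob_eq.
  pose proof (Dm_pos a b z Hab Hz). pose proof (Dm_pos a b w Hab Hw).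
  rewrite sub_div by lra. rewrite NDcross by auto. rewrite n2_div by (rewrite n2_mul; nra). rewrite n2_mul.
  field. repeat split; try lra.
Qed.

Lemma mob_hdist a b z w : su11 a b -> inD z -> inD w -> hdist (mob a b z) (mob a b w) = hdist z w.
Proof. intros. rewrite !hdist_chd, mob_chd; auto. Qed.

Lemma isMob_inD g z : isMob g -> inD z -> inD (g z).
Proof. intros [a [b [H1 H2]]] Hz. rewrite H2 by auto. apply mob_inD; auto. Qed.

Lemma isMob_hdist g z w : isMob g -> inD z -> inD w -> hdist (g z) (g w) = hdist z w.
Proof. intros [a [b [H1 H2]]] Hz Hw. rewrite !H2 by auto. apply mob_hdist; auto. Qed.

Lemma isMob_chd g z w : isMob g -> inD z -> inD w -> chd (g z) (g w) = chd z w.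
Proof. intros [a [b [H1 H2]]] Hz Hw. rewrite !H2 by auto. apply mob_chd; auto. Qed.

Lemma n2_RtoC r : n2 (RtoC r) = r ^ 2.
Proof. unfold n2; simpl. ring. Qed.

Lemma C_neq0 q : 0 < n2 q -> q <> 0%C.
Proof. intros H E. subst. unfold n2 in H; simpl in H. lra. Qed.

Lemma mob_inv a b z : su11 a b -> inD z -> mob (Cconj a) (- b)%C (mob a b z) = z.
Proof.
  intros Hab Hz. apply inD_n2 in Hz.
  pose proof (su11_n2 a b Hab) as H.
  set (N := (a * z + b)%C). set (D := (Cconj b * z + Cconj a)%C).
  assert (HD : 0 < n2 D).
  { assert (n2 D - n2 N = 1 - n2 z).
    { transitivity ((n2 a - n2 b) * (1 - n2 z)). 2: rewrite H; ring.
      unfold D, N, n2. destruct a as [a1 a2], b as [b1 b2], z as [z1 z2]; simpl. ring. }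
    pose proof (n2_nonneg N). lra. }
  pose proof (C_neq0 D HD) as D0.
  assert (E1 : (Cconj a * N - b * D)%C = z).
  { unfold N, D. unfold n2 in H. destruct a as [a1 a2], b as [b1 b2], z as [z1 z2]; cbn [fst snd] in H.
    unfold Cmult, Cminus, Cplus, Copp, Cconj; cbn [fst snd]. f_equal.
    - transitivity ((a1 ^ 2 + a2 ^ 2 - (b1 ^ 2 + b2 ^ 2)) * z1). ring. rewrite H. ring.
    - transitivity ((a1 ^ 2 + a2 ^ 2 - (b1 ^ 2 + b2 ^ 2)) * z2). ring. rewrite H. ring. }
  assert (E2 : (Cconj (- b) * N + Cconj (Cconj a) * D)%C = 1%C).
  { unfold N, D. unfold n2 in H. destruct a as [a1 a2], b as [b1 b2], z as [z1 z2]; cbn [fst snd] in H.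
    unfold Cmult, Cminus, Cplus, Copp, Cconj, RtoC; cbn [fst snd]. f_equal.
    - transitivity (a1 ^ 2 + a2 ^ 2 - (b1 ^ 2 + b2 ^ 2)). ring. rewrite H. ring.
    - ring. }
  unfold mob. fold N D.
  clearbody N D.
  assert (T1 : (Cconj a * (N / D) + - b)%C = ((Cconj a * N - b * D) / D)%C) by (clear - D0; field; auto).
  assert (T2 : (Cconj (- b) * (N / D) + Cconj (Cconj a))%C = ((Cconj (- b) * N + Cconj (Cconj a) * D) / D)%C) by (clear - D0; field; auto).
  rewrite T1, T2, E1, E2. clear - D0. field. auto.
Qed.

Lemma su11_inv a b : su11 a b -> su11 (Cconj a) (- b)%C.
Proof.
  unfold su11. rewrite !Cmod2. destruct a, b; unfold n2; simpl. intro H. nra.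
Qed.

Lemma diam_form s : diam s = RtoC ((exp s - 1) / (exp s + 1)).
Proof. reflexivity. Qed.

Lemma diam_n2 s : n2 (diam s) < 1.
Proof.
  rewrite diam_form, n2_RtoC. pose proof (exp_pos s).
  assert (-1 < (exp s - 1) / (exp s + 1) < 1).
  { split; [apply Rmult_lt_reg_r with (exp s + 1) | apply Rmult_lt_reg_r with (exp s + 1)]; try lra;
    unfold Rdiv; rewrite Rmult_assoc, Rinv_l by lra; lra. }
  nra.
Qed.

Lemma diam_chd s t : chd (diam s) (diam t) = cosh (s - t).
Proof.
  unfold chd. rewrite cosh_minus. unfold cosh, sinh. rewrite !exp_neg.
  rewrite !diam_form. unfold n2. unfold Cminus, Cplus, Copp, RtoC; cbn [fst snd].
  pose proof (exp_pos s). pose proof (exp_pos t).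
  set (E := exp s) in *. set (F := exp t) in *.
  assert (1 - ((E - 1) / (E + 1)) ^ 2 = 4 * E / (E+1)^2) by (field; lra).
  assert (1 - ((F - 1) / (F + 1)) ^ 2 = 4 * F / (F+1)^2) by (field; lra).
  replace (0 ^ 2) with 0 by ring. rewrite !Rplus_0_r. rewrite H1, H2.
  field. repeat split; lra.
Qed.

Lemma diam_geo : isGeodesic diam.
Proof.
  split. intro t. apply inD_n2, diam_n2.
  intros s t. rewrite hdist_chd, diam_chd, arcosh_cosh. reflexivity.
Qed.

Definition wk (k : R) : C := ((1 - k^2)/(1+k^2), 2*k/(1+k^2)).

Lemma wk_n2 k : n2 (wk k) = 1.
Proof. unfold wk, n2; simpl. assert (0 < 1 + k^2) by (pose proof (pow2_ge_0 k); lra). field. lra. Qed.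

Lemma rot_n2 w z : n2 w = 1 -> n2 (w * z)%C = n2 z.
Proof. intro H. rewrite n2_mul, H. ring. Qed.

Lemma rot_chd w z z' : n2 w = 1 -> chd (w * z)%C (w * z')%C = chd z z'.
Proof.
  intro H. unfold chd. rewrite !rot_n2 by auto.
  replace (w * z - w * z')%C with (w * (z - z'))%C by ring. rewrite rot_n2 by auto. reflexivity.
Qed.

Definition sq1 (x : C) := sqrt (1 - n2 x).
Definition aT (x : C) : C := RtoC (/ sq1 x).
Definition bT (x : C) : C := (fst x / sq1 x, snd x / sq1 x).

Lemma sq1_pos x : n2 x < 1 -> 0 < sq1 x.
Proof. intro. unfold sq1. apply sqrt_lt_R0. lra. Qed.

Lemma sq1_sq x : n2 x < 1 -> sq1 x ^ 2 = 1 - n2 x.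
Proof. intro. unfold sq1. apply pow2_sqrt. lra. Qed.

Lemma su11_T x : n2 x < 1 -> su11 (aT x) (bT x).
Proof.
  intro H. unfold su11. rewrite !Cmod2. pose proof (sq1_pos x H). pose proof (sq1_sq x H).
  unfold aT, bT, n2 in *; simpl. destruct x as [x1 x2]; simpl in *.
  field_simplify; try lra. replace (sq1 (x1, x2) ^ 2) with (1 - (x1 ^ 2 + x2 ^ 2)) by auto. field. lra.
Qed.

Lemma T0 x : n2 x < 1 -> mob (aT x) (bT x) 0 = x.
Proof.
  intro H. pose proof (sq1_pos x H). unfold mob, aT, bT. destruct x as [x1 x2].
  unfold Cdiv, Cinv, Cmult, Cplus, Cconj, RtoC; simpl. f_equal; field; lra.
Qed.

Definition ck (x : C) (k : R) (s : R) : C := mob (aT x) (bT x) (wk k * diam s)%C.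

Lemma wkdiam_inD k s : inD (wk k * diam s)%C.
Proof. apply inD_n2. rewrite rot_n2 by apply wk_n2. apply diam_n2. Qed.

Lemma ck_geo x k : inD x -> isGeodesic (ck x k).
Proof.
  intro Hx. apply inD_n2 in Hx. split.
  - intro t. unfold ck. apply mob_inD. apply su11_T; auto. apply wkdiam_inD.
  - intros s t. unfold ck. rewrite mob_hdist by (auto using su11_T, wkdiam_inD).
    rewrite hdist_chd, rot_chd by apply wk_n2. rewrite diam_chd, arcosh_cosh. reflexivity.
Qed.

Lemma ck_0 x k : inD x -> ck x k 0 = x.
Proof.
  intro Hx. apply inD_n2 in Hx. unfold ck.
  replace (wk k * diam 0)%C with (RtoC 0). apply T0; auto.
  rewrite diam_form, exp_0. unfold wk, RtoC, Cmult; simpl. f_equal; field; pose proof (pow2_ge_0 k); lra.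
Qed.

Definition Tinv (x y : C) : C := mob (Cconj (aT x)) (- bT x)%C y.

Lemma ck_chd x k y s : inD x -> inD y -> chd y (ck x k s) = chd (Tinv x y) (wk k * diam s)%C.
Proof.
  intros Hx Hy. pose proof Hx as Hx'. apply inD_n2 in Hx'.
  pose proof (su11_T x Hx') as HT.
  unfold ck, Tinv. rewrite <- (mob_chd _ _ _ _ (su11_inv _ _ HT)); auto.
  rewrite mob_inv; auto. apply wkdiam_inD.
  apply mob_inD; auto. apply wkdiam_inD.
Qed.

Lemma Tinv_inD x y : inD x -> inD y -> inD (Tinv x y).
Proof. intros. unfold Tinv. apply mob_inD; auto. apply su11_inv, su11_T, inD_n2; auto. Qed.

Lemma chd_explicit u w s : n2 u < 1 -> n2 w = 1 ->
  chd u (w * diam s)%C = (1 + n2 u)/(1 - n2 u) * cosh s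
     - (2 * (fst u * fst w + snd u * snd w) / (1 - n2 u)) * sinh s.
Proof.
  intros Hu Hw. unfold chd. rewrite rot_n2 by auto. rewrite diam_form, n2_RtoC.
  unfold cosh, sinh. rewrite !exp_neg. pose proof (exp_pos s).
  set (E := exp s) in *.
  assert (1 - ((E - 1) / (E + 1)) ^ 2 = 4 * E / (E+1)^2) by (field; lra).
  rewrite H0.
  unfold n2 in *. destruct u as [u1 u2], w as [w1 w2].
  unfold Cminus, Cplus, Copp, Cmult, RtoC; cbn [fst snd] in *.
  transitivity (1 + 2 * (u1^2 + u2^2 - 2 * ((E - 1) / (E + 1)) * (u1 * w1 + u2 * w2) + (w1^2+w2^2) * ((E - 1) / (E + 1))^2) /
      ((1 - (u1 ^ 2 + u2 ^ 2)) * (4 * E / (E + 1) ^ 2))).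
  f_equal. f_equal. f_equal. ring.
  rewrite Hw. field. repeat split; lra.
Qed.

Lemma sinh_neq0 v : v <> 0 -> sinh v <> 0.
Proof.
  intros H E. destruct (Rlt_le_dec v 0).
  - pose proof (sinh_lt v 0 r). rewrite sinh_0 in H0. lra.
  - pose proof (sinh_lt 0 v ltac:(lra)). rewrite sinh_0 in H0. lra.
Qed.

Definition pc2 (u : C) v := - 2 * fst u * cosh v - (1 + n2 u) * sinh v.
Definition pc1 (u : C) v := 4 * snd u * cosh v.
Definition pc0 (u : C) v := 2 * fst u * cosh v - (1 + n2 u) * sinh v.

Lemma bad_poly u v k A : n2 u < 1 ->
  (forall s, chd u (wk k * diam s)%C = A * cosh (s - v)) ->
  pc2 u v * k^2 + pc1 u v * k + pc0 u v = 0.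
Proof.
  intros Hu H.
  assert (He : forall s, (1 + n2 u)/(1 - n2 u) * cosh s - (2 * (fst u * fst (wk k) + snd u * snd (wk k)) / (1 - n2 u)) * sinh s = A * cosh (s - v)).
  { intro s. rewrite <- chd_explicit; auto. apply wk_n2. }
  set (Y0 := (1 + n2 u)/(1 - n2 u)) in *.
  set (be := 2 * (fst u * fst (wk k) + snd u * snd (wk k)) / (1 - n2 u)) in *.
  pose proof (He 0) as E0. pose proof (He 1) as E1.
  rewrite cosh_0, sinh_0 in E0. replace (0 - v) with (- v) in E0 by ring. rewrite cosh_opp in E0.
  rewrite cosh_minus in E1. pose proof sinh1_pos.
  assert (HY : Y0 = A * cosh v) by (rewrite <- E0; ring).
  assert (Hb : be = A * sinh v).
  { apply Rmult_eq_reg_r with (sinh 1). 2: lra.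
    rewrite HY in E1. lra. }
  assert (Hk : be * cosh v = Y0 * sinh v) by (rewrite Hb, HY; ring).
  unfold be, Y0 in Hk. unfold pc2, pc1, pc0, wk in *. cbn [fst snd] in *.
  assert (0 < 1 + k^2) by (pose proof (pow2_ge_0 k); lra).
  assert (Hk' : 2 * (fst u * ((1 - k ^ 2) / (1 + k ^ 2)) + snd u * (2 * k / (1 + k ^ 2))) * cosh v = (1 + n2 u) * sinh v).
  { apply Rmult_eq_reg_r with (/ (1 - n2 u)). 2: apply Rinv_neq_0_compat; lra.
    match type of Hk with ?L = ?R => transitivity L; [field; lra| rewrite Hk; field; lra] end. }
  apply Rmult_eq_reg_r with (/ (1 + k^2)). 2: apply Rinv_neq_0_compat; lra.
  rewrite Rmult_0_l. rewrite <- (Rminus_diag_eq _ _ Hk'). field. lra.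
Qed.

Lemma root_bound a2 a1 a0 : a2 <> 0 \/ a0 <> 0 ->
  exists M, forall k, M < k -> a2 * k^2 + a1 * k + a0 <> 0.
Proof.
  intro H. pose proof (Rabs_pos a0). pose proof (Rabs_pos a1). pose proof (Rabs_pos a2).
  destruct (Req_dec a2 0) as [E2|E2].
  - subst. destruct (Req_dec a1 0) as [E1|E1].
    + subst. exists 0. intros. destruct H; [lra|]. replace (0 * k^2 + 0 * k + a0) with a0 by ring. auto.
    + exists (Rabs a0 / Rabs a1). intros k Hk E.
      assert (Rabs a1 > 0) by (apply Rabs_pos_lt; auto).
      assert (Rabs a0 < Rabs a1 * k).
      { apply Rmult_lt_reg_r with (/ Rabs a1). apply Rinv_0_lt_compat; lra.
        replace (Rabs a1 * k * / Rabs a1) with k by (field; lra). auto. }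
      assert (Q1 : a1 * k = - a0) by lra.
      assert (Q2 : Rabs (a1 * k) = Rabs a0) by (rewrite Q1, Rabs_Ropp; auto).
      rewrite Rabs_mult in Q2. assert (0 < k). { assert (0 <= Rabs a0 / Rabs a1) by (apply Rdiv_le_0_compat; lra). lra. }
      rewrite (Rabs_pos_eq k) in Q2 by lra. lra.
  - exists (1 + (Rabs a1 + Rabs a0) / Rabs a2). intros k Hk E.
    assert (Rabs a2 > 0) by (apply Rabs_pos_lt; auto).
    assert (Hq : 0 <= (Rabs a1 + Rabs a0) / Rabs a2) by (apply Rdiv_le_0_compat; lra).
    assert (Hk1 : 1 < k) by lra.
    assert (Rabs a1 + Rabs a0 < Rabs a2 * (k - 1)).
    { apply Rmult_lt_reg_r with (/ Rabs a2). apply Rinv_0_lt_compat; lra.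
      replace (Rabs a2 * (k - 1) * / Rabs a2) with (k - 1) by (field; lra).
      unfold Rdiv in Hk. lra. }
    assert (Q1 : a2 * k^2 = - (a1 * k + a0)) by lra.
    assert (Q2 : Rabs (a2 * k^2) = Rabs (a1 * k + a0)) by (rewrite Q1, Rabs_Ropp; auto).
    rewrite Rabs_mult, (Rabs_pos_eq (k^2)) in Q2 by (apply pow2_ge_0).
    pose proof (Rabs_triang (a1 * k) a0) as Q3. rewrite Rabs_mult, (Rabs_pos_eq k) in Q3 by lra.
    assert (Rabs a2 * k^2 > (Rabs a1 + Rabs a0) * k).
    { replace (Rabs a2 * k^2) with (Rabs a2 * (k - 1) * k + Rabs a2 * k) by ring.
      assert (Rabs a2 * (k-1) * k > (Rabs a1 + Rabs a0) * k) by (apply Rmult_gt_compat_r; lra).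
      assert (Rabs a2 * k > 0) by nra. lra. }
    assert (Rabs a0 * k >= Rabs a0) by nra.
    nra.
Qed.

Lemma gen_one x y v : inD x -> inD y -> v <> 0 ->
  exists M, forall k, M < k -> forall A, ~ (forall s, chd y (ck x k s) = A * cosh (s - v)).
Proof.
  intros Hx Hy Hv.
  set (u := Tinv x y).
  assert (Hu : n2 u < 1) by (apply inD_n2, Tinv_inD; auto).
  destruct (root_bound (pc2 u v) (pc1 u v) (pc0 u v)) as [M HM].
  { destruct (Req_dec (pc2 u v) 0); auto. right. intro E. unfold pc2, pc0 in *.
    pose proof (sinh_neq0 v Hv). pose proof (n2_nonneg u).
    assert ((1 + n2 u) * sinh v = 0) by lra.
    apply Rmult_integral in H2. destruct H2; lra. }
  exists M. intros k Hk A H. apply (HM k Hk).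
  apply bad_poly with A; auto. intro s. unfold u. rewrite <- ck_chd; auto.
Qed.

Lemma gen_list x v (l : list C) : inD x -> v <> 0 ->
  exists M, forall y, In y l -> inD y -> forall k, M < k -> forall A, ~ (forall s, chd y (ck x k s) = A * cosh (s - v)).
Proof.
  intros Hx Hv. induction l as [|y l IH].
  - exists 0. intros y [].
  - destruct IH as [M1 H1].
    destruct (classic (inD y)) as [Hy|Hy].
    + destruct (gen_one x y v Hx Hy Hv) as [M2 H2].
      exists (Rmax M1 M2). intros y' [E|Hin] Hy' k Hk.
      * subst. apply H2. pose proof (Rmax_r M1 M2); lra.
      * apply H1; auto. pose proof (Rmax_l M1 M2); lra.
    + exists M1. intros y' [E|Hin] Hy' k Hk.
      * subst. contradiction.
      * apply H1; auto.
Qed.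

Definition Pm (c : R -> C) (v : R) (y : C) (g m : R) : Prop :=
  forall sg, Rabs (sg - v) <= g -> exists q, v - 1 <= q <= v + 1 /\ hdist y (c q) + m <= hdist y (c sg).

Lemma Pm_mono c v y g m g' m' : Pm c v y g m -> g' <= g -> m' <= m -> Pm c v y g' m'.
Proof.
  intros H Hg Hm sg Hs. destruct (H sg ltac:(lra)) as [q [Hq1 Hq2]]. exists q. split; auto. lra.
Qed.

Lemma prod_ge1 a b : 1 <= a -> 1 <= b -> 1 <= a * b.
Proof. intros. assert (0 <= (a - 1) * (b - 1)) by (apply Rmult_le_pos; lra). nra. Qed.

Lemma margin c v y : isGeodesic c -> inD y -> (forall A, ~ (forall s, chd y (c s) = A * cosh (s - v))) ->
  exists g m, 0 < g /\ g <= 1/2 /\ 0 < m /\ Pm c v y g m.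
Proof.
  intros Hc Hy Hbad.
  destruct (geo_proj c y Hc Hy) as [A [p [HA Hp]]].
  assert (Hpv : p <> v) by (intro E; subst; apply (Hbad A); auto).
  set (d := Rabs (v - p)).
  assert (Hd : 0 < d) by (apply Rabs_pos_lt; lra).
  set (g := Rmin (d/2) (1/2)).
  assert (Hg1 : 0 < g) by (unfold g; apply Rmin_pos; lra).
  assert (Hg2 : g <= d/2) by apply Rmin_l.
  assert (Hg3 : g <= 1/2) by apply Rmin_r.
  set (a := d - g). set (b := Rmax 0 (d - 1)).
  assert (Hb0 : 0 <= b) by apply Rmax_l.
  assert (Hab : b < a).
  { unfold b, a. apply Rmax_lub_lt; lra. }
  assert (Hq : exists q, v - 1 <= q <= v + 1 /\ Rabs (q - p) <= b).
  { destruct (Rle_dec d 1).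
    - exists p. unfold d in r. split. apply Rabs_le_between' in r. lra.
      rewrite Rminus_diag, Rabs_R0. auto.
    - destruct (Rlt_dec p v).
      + exists (v - 1). unfold d in n. rewrite Rabs_pos_eq in n by lra. split. lra.
        rewrite Rabs_pos_eq by lra. unfold b. rewrite Rmax_right. unfold d. rewrite Rabs_pos_eq by lra. lra.
        unfold d; rewrite Rabs_pos_eq by lra; lra.
      + exists (v + 1). unfold d in n. rewrite Rabs_minus_sym, Rabs_pos_eq in n by lra. split. lra.
        rewrite Rabs_minus_sym, Rabs_pos_eq by lra. unfold b. rewrite Rmax_right. unfold d. rewrite Rabs_minus_sym, Rabs_pos_eq by lra. lra.
        unfold d; rewrite Rabs_minus_sym, Rabs_pos_eq by lra; lra. }
  destruct Hq as [q [Hq1 Hq2]].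
  assert (Hca : A * cosh b < A * cosh a).
  { apply Rmult_lt_compat_l. lra. apply cosh_lt_nonneg; auto. }
  assert (Hb1 : 1 <= A * cosh b) by (apply prod_ge1; auto; apply cosh_ge1).
  exists g, (arcosh (A * cosh a) - arcosh (A * cosh b)).
  repeat split; auto.
  - pose proof (arcosh_lt _ _ Hb1 Hca). lra.
  - intros sg Hsg. exists q. split; auto.
    rewrite !hdist_chd, !Hp.
    assert (arcosh (A * cosh (q - p)) <= arcosh (A * cosh b)).
    { apply arcosh_le. apply prod_ge1; auto; apply cosh_ge1.
      apply Rmult_le_compat_l. lra. apply cosh_le_abs. rewrite (Rabs_pos_eq b); auto. }
    assert (arcosh (A * cosh a) <= arcosh (A * cosh (sg - p))).
    { apply arcosh_le. apply prod_ge1; auto; apply cosh_ge1.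
      apply Rmult_le_compat_l. lra. apply cosh_le_abs. rewrite (Rabs_pos_eq a) by lra.
      unfold a, d. pose proof (Rabs_triang (v - sg) (sg - p)) as Tr.
      replace (v - sg + (sg - p)) with (v - p) in Tr by ring. rewrite Rabs_minus_sym in Hsg. lra. }
    lra.
Qed.

Lemma margin_list c v (l : list C) :
  (forall y, In y l -> inD y -> exists g m, 0 < g /\ g <= 1/2 /\ 0 < m /\ Pm c v y g m) ->
  exists g m, 0 < g /\ g <= 1/2 /\ 0 < m /\ forall y, In y l -> inD y -> Pm c v y g m.
Proof.
  induction l as [|y l IH]; intro H.
  - exists (1/2), 1. repeat split; try lra. intros y [].
  - destruct IH as [g1 [m1 [G1 [G1' [M1 H1]]]]]. { intros; apply H; simpl; auto. }
    destruct (classic (inD y)) as [Hy|Hy].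
    + destruct (H y (or_introl eq_refl) Hy) as [g2 [m2 [G2 [G2' [M2 H2]]]]].
      exists (Rmin g1 g2), (Rmin m1 m2). repeat split.
      apply Rmin_pos; auto. pose proof (Rmin_l g1 g2); lra. apply Rmin_pos; auto.
      intros y' [E|Hin] Hy'.
      * subst. eapply Pm_mono; eauto. apply Rmin_r. apply Rmin_r.
      * eapply Pm_mono; eauto. apply Rmin_l. apply Rmin_l.
    + exists g1, m1. repeat split; auto. intros y' [E|Hin] Hy'.
      * subst; contradiction.
      * auto.
Qed.

Lemma euclid_bound y R0 : inD y -> hdist 0 y <= R0 ->
  n2 y <= (cosh R0 - 1) / (cosh R0 + 1).
Proof.
  intros Hy H. apply inD_n2 in Hy.
  assert (H0 : n2 (RtoC 0) < 1) by (rewrite n2_RtoC; lra).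
  assert (Hc : chd 0 y <= cosh R0).
  { pose proof (chd_ge1 _ _ H0 Hy). rewrite hdist_chd in H.
    apply le_arcosh_cosh; auto. apply Rle_trans with (arcosh (chd 0 y)); auto. apply arcosh_nonneg; auto. }
  unfold chd in Hc. rewrite n2_RtoC in Hc.
  replace (n2 (0 - y)%C) with (n2 y) in Hc by (unfold n2; simpl; ring).
  replace (0 ^ 2) with 0 in Hc by ring.
  pose proof (cosh_ge1 R0). pose proof (n2_nonneg y).
  assert (1 + 2 * n2 y / ((1 - 0) * (1 - n2 y)) = (1 + n2 y) / (1 - n2 y)) by (field; lra).
  rewrite H3 in Hc.
  assert (1 + n2 y <= cosh R0 * (1 - n2 y)).
  { apply Rmult_le_reg_r with (/ (1 - n2 y)). apply Rinv_0_lt_compat; lra.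
    replace (cosh R0 * (1 - n2 y) * / (1 - n2 y)) with (cosh R0) by (field; lra). auto. }
  apply Rmult_le_reg_r with (cosh R0 + 1). lra.
  replace ((cosh R0 - 1) / (cosh R0 + 1) * (cosh R0 + 1)) with (cosh R0 - 1) by (field; lra).
  nra.
Qed.

Lemma Cmod_n2 z : Cmod z = sqrt (n2 z).
Proof. reflexivity. Qed.

Lemma interior_in (tau : C -> Prop) x : interiorD tau x -> tau x.
Proof.
  intros [e [He H]]. apply H. replace (x - x)%C with (RtoC 0) by ring.
  rewrite Cmod_0. auto.
Qed.

Theorem lemma3p4 (Gamma : (C -> C) -> Prop) (tau : C -> Prop) (kappa : R -> C)
  (x : C) (rho : R) :
  fuchsian Gamma -> cocompact Gamma ->
  hyperbolic_polygon tau -> fundamental_domain Gamma tau ->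
  side_pairings_not_involutions Gamma tau ->
  isGeodesic kappa -> dense_orbit Gamma kappa ->
  interiorD tau x -> (0 < rho)%R ->
  every_geodesic_meets_ball Gamma x rho ->
  aperiodic (Splus Gamma kappa rho x).
Proof.
  intros HF _ _ HFD _ Hk Hdense Hxi Hrho _.
  intros v Hv HS.
  assert (Hx : inD x) by (apply (proj1 HFD), interior_in; auto).
  destruct HF as [Hmob [_ [Hcomp [Hinv Hdisc]]]].
  assert (H0D : inD 0) by (apply inD_n2; rewrite n2_RtoC; lra).
  (* discreteness: finite candidate list *)
  set (R0 := rho + Rabs v + 2).
  set (K := cosh (hdist 0 x + R0)).
  set (r2 := (K - 1) / (K + 1)).
  assert (HK : 1 <= K) by apply cosh_ge1.
  assert (Hr2 : r2 < 1). { unfold r2. apply Rmult_lt_reg_r with (K + 1). lra.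
    unfold Rdiv. rewrite Rmult_assoc, Rinv_l by lra. lra. }
  assert (Hx2 : n2 x < 1) by (apply inD_n2; auto).
  set (rr := sqrt (Rmax r2 (n2 x))).
  assert (Hrr : 0 <= rr < 1).
  { split. apply sqrt_pos. unfold rr. rewrite <- sqrt_1. apply sqrt_lt_1_alt. split.
    apply Rle_trans with (n2 x). apply n2_nonneg. apply Rmax_r. apply Rmax_lub_lt; auto. }
  destruct (Hdisc rr Hrr) as [l Hl].
  set (Ys := map (fun h : C -> C => h x) l).
  assert (Hcand : forall kk, Gamma kk -> hdist x (kk x) <= R0 -> In (kk x) Ys).
  { intros kk Hkk Hd.
    assert (Hkx : inD (kk x)) by (apply isMob_inD; auto).
    assert (hdist 0 (kk x) <= hdist 0 x + R0).
    { pose proof (hdist_tri 0 x (kk x) H0D Hx Hkx). lra. }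
    pose proof (euclid_bound _ _ Hkx H).
    destruct (Hl kk Hkk) as [h [Hh1 Hh2]].
    { exists x. split; rewrite Cmod_n2; unfold rr; apply sqrt_le_1_alt.
      apply Rmax_r. apply Rle_trans with r2. auto. apply Rmax_l. }
    rewrite <- Hh2 by auto. unfold Ys. apply (in_map (fun h0 : C -> C => h0 x)). auto. }
  destruct (gen_list x v Ys Hx Hv) as [M HM].
  set (k := Rmax M 0 + 1).
  assert (Hkm : M < k) by (unfold k; pose proof (Rmax_l M 0); lra).
  set (c := ck x k).
  assert (Hc : isGeodesic c) by (apply ck_geo; auto).
  assert (Hc0 : c 0 = x) by (apply ck_0; auto).
  destruct (margin_list c v Ys) as [gm [mu [Hg1 [Hg2 [Hmu HPm]]]]].
  { intros y Hin Hy. apply margin; auto. intro A. apply (HM y Hin Hy k Hkm A). }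
  set (dl := Rmin 1 (mu / 3)).
  assert (Hdl : 0 < dl) by (apply Rmin_pos; lra).
  assert (Hdl1 : dl <= 1) by apply Rmin_l.
  assert (Hdl2 : dl <= mu / 3) by apply Rmin_r.
  assert (HKc : 0 < Kc).
  { unfold Kc. pose proof sinh1_pos. pose proof (cosh_ge1 1).
    assert (0 < / sinh 1 ^ 2) by (apply Rinv_0_lt_compat; nra).
    assert (0 < / (2 * cosh 1 * sinh 1)) by (apply Rinv_0_lt_compat; nra). lra. }
  set (Cv := cosh (Rabs v + 1)).
  assert (HCv : 1 <= Cv) by apply cosh_ge1.
  set (eta := (cosh dl - 1) / (Kc * Cv ^ 2)).
  assert (Hcd : 1 < cosh dl) by (rewrite <- cosh_0; apply cosh_lt_nonneg; lra).
  assert (Heta : 0 < eta) by (unfold eta; apply Rdiv_lt_0_compat; [lra| apply Rmult_lt_0_compat; nra]).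
  set (eps := Rmin (Rmin gm (rho / 2)) (arcosh (1 + eta))).
  assert (Hae : 0 < arcosh (1 + eta)) by (rewrite <- arcosh_1; apply arcosh_lt; lra).
  assert (He1 : eps <= gm) by (unfold eps; pose proof (Rmin_l (Rmin gm (rho/2)) (arcosh (1+eta))); pose proof (Rmin_l gm (rho/2)); lra).
  assert (He2 : eps <= rho / 2) by (unfold eps; pose proof (Rmin_l (Rmin gm (rho/2)) (arcosh (1+eta))); pose proof (Rmin_r gm (rho/2)); lra).
  assert (He3 : eps <= arcosh (1 + eta)) by (apply Rmin_r).
  assert (He0 : 0 < eps) by (unfold eps; repeat apply Rmin_pos; lra).
  destruct (Hdense c Hc eps He0) as [t [g [Hg Happ]]].
  assert (Hgm : isMob g) by auto.
  set (lt := fun s => g (kappa (t + s))).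
  assert (Hlt : isGeodesic lt).
  { split. intro s. apply isMob_inD; auto. apply Hk.
    intros s s'. unfold lt. rewrite isMob_hdist by (auto; apply Hk). rewrite (proj2 Hk). f_equal. ring. }
  assert (Happ3 : forall s, -1 <= s <= 1 -> chd (lt s) (c s) <= 1 + eta).
  { intros s Hs. pose proof (Happ s Hs) as Ha. fold (lt s) in Ha.
    rewrite <- (cosh_hdist _ _ (proj1 Hlt s) (proj1 Hc s)).
    rewrite <- (cosh_arcosh (1 + eta)) by lra. left. apply cosh_lt_nonneg.
    apply hdist_nonneg; [apply Hlt| apply Hc]. lra. }
  pose proof (LR lt c eta Hlt Hc (Happ3 (-1) ltac:(lra)) (Happ3 0 ltac:(lra)) (Happ3 1 ltac:(lra))) as HLR.
  assert (Hdel : forall s, v - 1 <= s <= v + 1 -> hdist (lt s) (c s) <= dl).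
  { intros s Hs. rewrite hdist_chd. apply arcosh_le_cosh. apply chd_ge1; apply inD_n2; [apply Hlt| apply Hc]. lra.
    apply Rle_trans with (1 + eta * Kc * cosh s ^ 2). auto.
    assert (cosh s <= Cv). { apply cosh_le_abs. rewrite (Rabs_pos_eq (Rabs v + 1)) by (pose proof (Rabs_pos v); lra).
      apply Rabs_le. pose proof (Rle_abs v). pose proof (Rle_abs (-v)). rewrite Rabs_Ropp in H0. lra. }
    assert (cosh s ^ 2 <= Cv ^ 2). { pose proof (cosh_pos s). nra. }
    assert (eta * Kc * cosh s ^ 2 <= eta * Kc * Cv ^ 2). { apply Rmult_le_compat_l; nra. }
    assert (eta * Kc * Cv ^ 2 = cosh dl - 1) by (unfold eta; field; split; nra).
    lra. }
  destruct (Hinv g Hg) as [gi [Hgi Hgi']].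
  assert (Hgim : isMob gi) by auto.
  set (z0 := gi x).
  assert (Hz0 : inD z0) by (apply isMob_inD; auto).
  assert (Hz0t : hdist z0 (kappa t) < eps).
  { unfold z0. rewrite <- (Hgi' (kappa t)) by apply Hk.
    rewrite isMob_hdist; auto. 2: apply isMob_inD; auto; apply Hk.
    rewrite hdist_sym. pose proof (Happ 0 ltac:(lra)). rewrite Hc0 in H. rewrite Rplus_0_r in H. auto. }
  destruct (geo_proj kappa z0 Hk Hz0) as [A [p [HA Hp]]].
  assert (HSp : Splus Gamma kappa rho x p).
  { exists gi. split; auto. split.
    - split; auto. left. exists t. fold z0. lra.
    - intro s. fold z0. rewrite !hdist_chd, !Hp. apply arcosh_le.
      replace (p - p) with 0 by ring. rewrite cosh_0. lra.
      apply Rmult_le_compat_l. lra. replace (p - p) with 0 by ring. rewrite cosh_0. apply cosh_ge1. }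
  assert (Htp : Rabs (p - t) < eps).
  { destruct (Rlt_le_dec (Rabs (p - t)) eps); auto. exfalso.
    assert (cosh eps <= cosh (t - p)). { apply cosh_le_abs. rewrite Rabs_pos_eq by lra. rewrite Rabs_minus_sym. auto. }
    assert (chd z0 (kappa t) < cosh eps).
    { rewrite <- cosh_hdist by (auto; apply Hk). apply cosh_lt_nonneg; auto. apply hdist_nonneg; auto. apply Hk. }
    rewrite Hp in H0. pose proof (cosh_ge1 (t - p)). nra. }
  apply HS in HSp. destruct HSp as [h [Hh [HN Hmin]]].
  assert (Hhm : isMob h) by auto.
  assert (Hhx : inD (h x)) by (apply isMob_inD; auto).
  assert (Ht0 : exists t0, hdist (h x) (kappa t0) <= rho).
  { destruct HN as [_ [[t0 Ht0]|[_ [_ [t0 Ht0]]]]]; exists t0; lra. }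
  destruct Ht0 as [t0 Ht0].
  destruct (Hcomp g h Hg Hh) as [kk [Hkk Hkk']].
  set (y := g (h x)).
  assert (Hy : inD y) by (apply isMob_inD; auto).
  set (s2 := p + v - t).
  assert (Hts2 : t + s2 = p + v) by (unfold s2; ring).
  assert (Hs2v : Rabs (s2 - v) <= gm) by (unfold s2; replace (p + v - t - v) with (p - t) by ring; lra).
  assert (Hs2w : v - 1 <= s2 <= v + 1) by (apply Rabs_le_between' in Hs2v; lra).
  assert (Hyl : forall s, hdist y (lt s) = hdist (h x) (kappa (t + s))).
  { intro s. unfold y, lt. apply isMob_hdist; auto. apply Hk. }
  assert (Hy2 : hdist y (lt s2) <= rho).
  { rewrite Hyl, Hts2. apply Rle_trans with (hdist (h x) (kappa t0)); auto. }
  assert (Hyin : In y Ys).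
  { unfold y. rewrite <- Hkk' by auto. apply Hcand; auto. rewrite Hkk' by auto. fold y.
    pose proof (hdist_tri x (c s2) y Hx (proj1 Hc s2) Hy).
    pose proof (hdist_tri (c s2) (lt s2) y (proj1 Hc s2) (proj1 Hlt s2) Hy).
    assert (hdist x (c s2) = Rabs s2) by (rewrite <- Hc0, (proj2 Hc); replace (0 - s2) with (- s2) by ring; apply Rabs_Ropp).
    assert (Rabs s2 <= Rabs v + 1/2).
    { pose proof (Rabs_triang (s2 - v) v) as Tr. replace (s2 - v + v) with s2 in Tr by ring. lra. }
    pose proof (Hdel s2 Hs2w) as Hd2. rewrite hdist_sym in Hd2.
    rewrite (hdist_sym (lt s2) y) in H0. unfold R0. lra. }
  destruct (HPm y Hyin Hy s2 Hs2v) as [q [Hq1 Hq2]].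
  assert (Hmq : hdist y (lt s2) <= hdist y (lt q)).
  { rewrite !Hyl, Hts2. apply Hmin. }
  pose proof (hdist_tri y (lt s2) (c s2) Hy (proj1 Hlt s2) (proj1 Hc s2)).
  pose proof (hdist_tri y (c q) (lt q) Hy (proj1 Hc q) (proj1 Hlt q)).
  pose proof (Hdel s2 Hs2w). pose proof (Hdel q Hq1) as Hdq.
  rewrite hdist_sym in Hdq.
  lra.
Qed.
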